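(* Let $M$ be the monoid presented by $\langle a,b,c\mid ac=ca,\ bc=cb,\ cab=cbb\rangle$. The infinite rewriting system over $\{a,b,c\}$ with rules $ac\to ca$, $bc\to cb$, and $cuab\to cubb$ for every $u\in\{a,b\}^*$ (the case $u=\varepsilon$ being $cab\to cbb$) is a complete (noetherian and confluent) rewriting system presenting $M$, and its set of irreducible words is $\{a,b\}^*\cup c^+b^*a^*$. *)

(* Defs.v *)
From Stdlib Require Export List Relations.
Export ListNotations.

Inductive letter : Type := a | b | c.
Definition word := list letter.

Definition ab_word (u : word) : Prop := Forall (fun x => x = a \/ x = b) u.

Inductive ruleR : word -> word -> Prop :=
| rule_ac : ruleR [a; c] [c; a]
| rule_bc : ruleR [b; c] [c; b]
| rule_cuab : forall u, ab_word u -> ruleR (c :: u ++ [a; b]) (c :: u ++ [b; b]).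

Inductive relM : word -> word -> Prop :=
| rel_ac : relM [a; c] [c; a]
| rel_bc : relM [b; c] [c; b]
| rel_cab : relM [c; a; b] [c; b; b].

Definition step_of (rl : word -> word -> Prop) (w w' : word) : Prop :=
  exists x y l r, rl l r /\ w = x ++ l ++ y /\ w' = x ++ r ++ y.

Definition stepR := step_of ruleR.

(* the monoid congruence (Thue congruence) generated by a set of rules/relations;
   two words are equal in the presented monoid iff they are congruent *)
Definition thue_cong (rl : word -> word -> Prop) : word -> word -> Prop :=
  clos_refl_sym_trans word (step_of rl).

Definition noetherian (st : word -> word -> Prop) : Prop :=
  well_founded (fun v u => st u v).

Definition confluent (st : word -> word -> Prop) : Prop :=
  forall u v w, clos_refl_trans word st u v -> clos_refl_trans word st u w ->
    exists z, clos_refl_trans word st v z /\ clos_refl_trans word st w z.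

Definition irreducible (st : word -> word -> Prop) (w : word) : Prop :=
  forall w', ~ st w w'.

Definition normal_forms (w : word) : Prop :=
  ab_word w \/ exists n m k, w = repeat c (S n) ++ repeat b m ++ repeat a k.

(* Main.v *)
Require Import Defs.
From Stdlib Require Import Lia Arith Bool Classical.
Open Scope bool_scope.

Fixpoint na (w : word) : nat := match w with [] => 0 | a :: s => S (na s) | _ :: s => na s end.
Fixpoint nb (w : word) : nat := match w with [] => 0 | b :: s => S (nb s) | _ :: s => nb s end.
Fixpoint nc (w : word) : nat := match w with [] => 0 | c :: s => S (nc s) | _ :: s => nc s end.
Fixpoint inv (w : word) : nat := match w with [] => 0 | c :: s => inv s | _ :: s => nc s + inv s end.
Fixpoint hasb (w : word) : bool := match w with [] => false | b :: _ => true | _ :: s => hasb s end.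
Fixpoint ta (w : word) : nat := match w with [] => 0
  | a :: s => if hasb s then ta s else S (ta s) | _ :: s => ta s end.

Lemma na_app u v : na (u ++ v) = na u + na v.
Proof. induction u as [|[] u IH]; simpl; lia. Qed.
Lemma nb_app u v : nb (u ++ v) = nb u + nb v.
Proof. induction u as [|[] u IH]; simpl; lia. Qed.
Lemma nc_app u v : nc (u ++ v) = nc u + nc v.
Proof. induction u as [|[] u IH]; simpl; lia. Qed.
Lemma inv_app u v : inv (u ++ v) = inv u + (na u + nb u) * nc v + inv v.
Proof. induction u as [|[] u IH]; simpl; rewrite ?nc_app, ?IH; nia. Qed.
Lemma hasb_app u v : hasb (u ++ v) = hasb u || hasb v.
Proof. induction u as [|[] u IH]; simpl; auto. Qed.
Lemma ta_app u v : ta (u ++ v) = if hasb v then ta v else ta u + ta v.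
Proof.
  induction u as [|[] u IH]; simpl.
  - destruct (hasb v); reflexivity.
  - rewrite hasb_app, IH. destruct (hasb u), (hasb v); simpl; lia.
  - exact IH.
  - exact IH.
Qed.

Lemma step_dec w w' : stepR w w' -> na w' < na w \/ (na w' = na w /\ inv w' < inv w).
Proof.
  intros [x [y [l [r [Hr [-> ->]]]]]].
  destruct Hr.
  - rewrite !na_app, !inv_app; simpl; nia.
  - rewrite !na_app, !inv_app; simpl; nia.
  - left. rewrite !na_app; simpl. rewrite !na_app; simpl. lia.
Qed.

Lemma noeth : noetherian stepR.
Proof.
  intro w.
  remember (na w) as n eqn:Hn. revert w Hn.
  induction n as [n IHn] using lt_wf_ind.
  intros w Hn. remember (inv w) as m eqn:Hm. revert w Hn Hm.
  induction m as [m IHm] using lt_wf_ind.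
  intros w Hn Hm. constructor. intros w' Hs.
  destruct (step_dec _ _ Hs) as [H|[H1 H2]].
  - eapply IHn; [|reflexivity]. lia.
  - eapply IHm; [|lia|reflexivity]. lia.
Qed.

Lemma rule_inv l r : ruleR l r ->
  ta l = ta r /\ hasb l = hasb r /\ nc l = nc r /\ length l = length r /\ nc l <> 0.
Proof.
  intros []; simpl; auto.
  rewrite !ta_app, !hasb_app, !nc_app, !length_app; simpl.
  rewrite Bool.orb_true_r. repeat split; lia.
Qed.

Definition nf (w : word) : word :=
  if Nat.eqb (nc w) 0 then w
  else repeat c (nc w) ++ repeat b (length w - nc w - ta w) ++ repeat a (ta w).

Lemma nf_step w w' : stepR w w' -> nf w = nf w'.
Proof.
  intros [x [y [l [r [Hr [-> ->]]]]]].
  destruct (rule_inv _ _ Hr) as [H1 [H2 [H3 [H4 H5]]]].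
  assert (Ec : nc (x ++ l ++ y) = nc (x ++ r ++ y)) by (rewrite !nc_app; lia).
  assert (El : length (x ++ l ++ y) = length (x ++ r ++ y)) by (rewrite !length_app; lia).
  assert (Et : ta (x ++ l ++ y) = ta (x ++ r ++ y)).
  { rewrite !ta_app, !hasb_app, H1, H2. reflexivity. }
  assert (Hn : nc (x ++ l ++ y) <> 0) by (rewrite !nc_app; lia).
  unfold nf. rewrite Ec, El, Et. rewrite <- Ec.
  destruct (Nat.eqb_spec (nc (x ++ l ++ y)) 0); [contradiction|reflexivity].
Qed.

Lemma nf_rt w w' : clos_refl_trans word stepR w w' -> nf w = nf w'.
Proof. induction 1; auto using nf_step; congruence. Qed.

Lemma hasb_repa k : hasb (repeat a k) = false.
Proof. induction k; simpl; auto. Qed.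
Lemma ta_repa k : ta (repeat a k) = k.
Proof. induction k; simpl; auto. rewrite hasb_repa; auto. Qed.
Lemma ta_repb k : ta (repeat b k) = 0.
Proof. induction k; simpl; auto. Qed.
Lemma ta_repc k : ta (repeat c k) = 0.
Proof. induction k; simpl; auto. Qed.
Lemma nc_repa k : nc (repeat a k) = 0.
Proof. induction k; simpl; auto. Qed.
Lemma nc_repb k : nc (repeat b k) = 0.
Proof. induction k; simpl; auto. Qed.
Lemma nc_repc k : nc (repeat c k) = k.
Proof. induction k; simpl; auto. Qed.

Lemma nc_ab w : ab_word w -> nc w = 0.
Proof. induction 1 as [|x l [-> | ->] _ IH]; simpl; auto. Qed.

Lemma nf_normal w : normal_forms w -> nf w = w.
Proof.
  intros [H|[n [m [k ->]]]].
  - unfold nf. rewrite nc_ab; auto.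
  - assert (H1 : nc (repeat c (S n) ++ repeat b m ++ repeat a k) = S n).
    { rewrite !nc_app, nc_repc, nc_repb, nc_repa. lia. }
    assert (H2 : length (repeat c (S n) ++ repeat b m ++ repeat a k) = S n + m + k).
    { rewrite !length_app, !repeat_length. lia. }
    assert (H3 : ta (repeat c (S n) ++ repeat b m ++ repeat a k) = k).
    { rewrite !ta_app, !hasb_app, hasb_repa, ta_repa, ta_repb, ta_repc.
      destruct (hasb (repeat b m)); simpl; lia. }
    unfold nf. rewrite H1, H2, H3. simpl Nat.eqb. cbv iota.
    replace (S n + m + k - S n - k) with m by lia. reflexivity.
Qed.

Lemma ab_split s : ab_word s ->
  (exists m k, s = repeat b m ++ repeat a k) \/
  (exists u v, ab_word u /\ s = u ++ [a; b] ++ v).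
Proof.
  induction 1 as [|z s Hz Hs IH].
  - left. exists 0, 0. reflexivity.
  - destruct IH as [[m [k ->]]|[u [v [Hu ->]]]].
    + destruct Hz as [->| ->].
      * destruct m as [|m].
        -- left. exists 0, (S k). reflexivity.
        -- right. exists [], (repeat b m ++ repeat a k). split; [constructor|reflexivity].
      * left. exists (S m), k. reflexivity.
    + right. exists (z :: u), v. split; [constructor; auto|reflexivity].
Qed.

Lemma irr_cons z w : irreducible stepR (z :: w) -> irreducible stepR w.
Proof.
  intros H w' [x [y [l [r [Hr [-> ->]]]]]].
  apply (H (z :: x ++ r ++ y)). exists (z :: x), y, l, r. auto.
Qed.

Lemma irr_nf w : irreducible stepR w -> normal_forms w.
Proof.
  induction w as [|z w IH]; intros H.
  - left. constructor.
  - specialize (IH (irr_cons _ _ H)).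
    destruct z.
    + destruct IH as [Hab|[n [m [k ->]]]].
      * left. constructor; auto.
      * exfalso. apply (H ([c; a] ++ repeat c n ++ repeat b m ++ repeat a k)).
        exists [], (repeat c n ++ repeat b m ++ repeat a k), [a; c], [c; a].
        split; [constructor|split; reflexivity].
    + destruct IH as [Hab|[n [m [k ->]]]].
      * left. constructor; auto.
      * exfalso. apply (H ([c; b] ++ repeat c n ++ repeat b m ++ repeat a k)).
        exists [], (repeat c n ++ repeat b m ++ repeat a k), [b; c], [c; b].
        split; [constructor|split; reflexivity].
    + right. destruct IH as [Hab|[n [m [k ->]]]].
      * destruct (ab_split _ Hab) as [[m [k ->]]|[u [v [Hu ->]]]].
        -- exists 0, m, k. reflexivity.
        -- exfalso. apply (H (c :: u ++ [b; b] ++ v)).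
           exists [], v, (c :: u ++ [a; b]), (c :: u ++ [b; b]).
           split; [constructor; auto|]. simpl. rewrite <- !app_assoc. split; reflexivity.
      * exists (S n), m, k. reflexivity.
Qed.

Lemma adj_cons (p q z : letter) (w : word) :
  (exists x y, z :: w = x ++ p :: q :: y) ->
  (z = p /\ exists y, w = q :: y) \/ (exists x y, w = x ++ p :: q :: y).
Proof.
  intros [x [y H]]. destruct x as [|z' x]; simpl in H; injection H; intros; subst.
  - left. eauto.
  - right. eauto.
Qed.

Lemma no_adj (n m k : nat) (p q : letter) :
  (p = a /\ q = c) \/ (p = b /\ q = c) \/ (p = a /\ q = b) ->
  ~ exists x y, repeat c n ++ repeat b m ++ repeat a k = x ++ p :: q :: y.
Proof.
  intros Hpq. destruct Hpq as [[-> ->]|[[-> ->]|[-> ->]]];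
  (induction n as [|n IHn]; simpl;
  [ induction m as [|m IHm]; simpl;
    [ induction k as [|k IHk]; simpl;
      [ intros [x [y H]]; destruct x; discriminate
      | intros H; apply adj_cons in H; destruct H as [[Hz [y Hy]]|H]; auto;
        destruct k; simpl in Hy; discriminate ]
    | intros H; apply adj_cons in H; destruct H as [[Hz [y Hy]]|H]; auto;
      try discriminate; destruct m, k; simpl in Hy; discriminate ]
  | intros H; apply adj_cons in H; destruct H as [[Hz [y Hy]]|H]; auto; discriminate ]).
Qed.

Lemma nf_irr w : normal_forms w -> irreducible stepR w.
Proof.
  intros Hn w' [x [y [l [r [Hr [Hw _]]]]]].
  destruct Hn as [Hab|[n [m [k Hk]]]].
  - assert (Hc : In c l) by (destruct Hr; simpl; auto).
    unfold ab_word in Hab. rewrite Forall_forall in Hab.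
    destruct (Hab c) as [H|H]; [|discriminate|discriminate].
    rewrite Hw. apply in_or_app. right. apply in_or_app. auto.
  - rewrite Hk in Hw. destruct Hr.
    + apply (no_adj (S n) m k a c); auto. exists x, y. exact Hw.
    + apply (no_adj (S n) m k b c); auto. exists x, y. exact Hw.
    + apply (no_adj (S n) m k a b); auto. exists (x ++ c :: u), y.
      rewrite Hw. simpl. rewrite <- !app_assoc. reflexivity.
Qed.

Lemma exists_irr w : exists w', clos_refl_trans word stepR w w' /\ irreducible stepR w'.
Proof.
  induction (noeth w) as [w _ IH].
  destruct (classic (exists w', stepR w w')) as [[w' Hs]|Hn].
  - destruct (IH w' Hs) as [w'' [H1 H2]]. exists w''. split; auto.
    eapply rt_trans; [apply rt_step; exact Hs|exact H1].
  - exists w. split; [apply rt_refl|]. intros w' Hs. apply Hn. eauto.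
Qed.

Lemma to_nf w : clos_refl_trans word stepR w (nf w).
Proof.
  destruct (exists_irr w) as [w' [H1 H2]].
  rewrite (nf_rt _ _ H1), (nf_normal _ (irr_nf _ H2)). exact H1.
Qed.

Lemma conf : confluent stepR.
Proof.
  intros u v w Hv Hw. exists (nf u). split.
  - rewrite (nf_rt _ _ Hv). apply to_nf.
  - rewrite (nf_rt _ _ Hw). apply to_nf.
Qed.

Lemma cong_ctx rl x y v w : thue_cong rl v w -> thue_cong rl (x ++ v ++ y) (x ++ w ++ y).
Proof.
  induction 1 as [v w [x' [y' [l [r [Hr [-> ->]]]]]]| | |].
  - apply rst_step. exists (x ++ x'), (y' ++ y), l, r.
    rewrite <- !app_assoc. auto.
  - apply rst_refl.
  - apply rst_sym; auto.
  - eapply rst_trans; eauto.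
Qed.

Lemma cong_incl (rl1 rl2 : word -> word -> Prop) :
  (forall l r, rl1 l r -> thue_cong rl2 l r) ->
  forall u v, thue_cong rl1 u v -> thue_cong rl2 u v.
Proof.
  intros Hi u v H. induction H as [v w [x [y [l [r [Hr [-> ->]]]]]]| | |].
  - apply cong_ctx. auto.
  - apply rst_refl.
  - apply rst_sym; auto.
  - eapply rst_trans; eauto.
Qed.

Lemma cong_l rl x v w : thue_cong rl v w -> thue_cong rl (x ++ v) (x ++ w).
Proof. intros H. pose proof (cong_ctx rl x [] v w H) as H'. rewrite !app_nil_r in H'. exact H'. Qed.
Lemma cong_r rl y v w : thue_cong rl v w -> thue_cong rl (v ++ y) (w ++ y).
Proof. intros H. exact (cong_ctx rl [] y v w H). Qed.

Lemma c_move u : ab_word u -> thue_cong relM (c :: u) (u ++ [c]).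
Proof.
  induction 1 as [|z u Hz Hu IH].
  - apply rst_refl.
  - eapply rst_trans.
    + apply rst_sym. apply rst_step. exists [], u, [z; c], [c; z].
      split; [destruct Hz as [-> | ->]; constructor|split; reflexivity].
    + exact (cong_l relM [z] _ _ IH).
Qed.

Lemma rule_in_M l r : ruleR l r -> thue_cong relM l r.
Proof.
  intros [| |u Hu].
  - apply rst_step. exists [], [], [a; c], [c; a]. split; [constructor|auto].
  - apply rst_step. exists [], [], [b; c], [c; b]. split; [constructor|auto].
  - pose proof (c_move u Hu) as H.
    eapply rst_trans; [exact (cong_r relM [a; b] _ _ H)|].
    eapply rst_trans; [|apply rst_sym; exact (cong_r relM [b; b] _ _ H)].
    rewrite <- !app_assoc. apply cong_l. apply rst_step.
    exists [], [], [c; a; b], [c; b; b]. split; [constructor|auto].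
Qed.

Lemma rel_in_R l r : relM l r -> thue_cong ruleR l r.
Proof.
  intros [| |].
  - apply rst_step. exists [], [], [a; c], [c; a]. split; [constructor|auto].
  - apply rst_step. exists [], [], [b; c], [c; b]. split; [constructor|auto].
  - apply rst_step. exists [], [], [c; a; b], [c; b; b].
    split; [apply (rule_cuab []); constructor|auto].
Qed.

Theorem lemma3p10 :
  noetherian stepR /\ confluent stepR /\
  (forall u v, thue_cong ruleR u v <-> thue_cong relM u v) /\
  (forall w, irreducible stepR w <-> normal_forms w).
Proof.
  split; [exact noeth|]. split; [exact conf|]. split.
  - intros u v. split; apply cong_incl; auto using rule_in_M, rel_in_R.
  - intros w. split; auto using irr_nf, nf_irr.
Qed.
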